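(* Let $\alpha>0$ and let $\mathfrak f(t)=\sum_{n\ge0}\widehat{\mathfrak f}(n)e^{int}$ with $\sum_{n\ge0}n^\alpha|\widehat{\mathfrak f}(n)|<\infty$. Then $\mathfrak f\in A_+^\alpha(\mathbb{T})$, i.e. $\sum_{n\ge0}k^{\alpha+1}(n)|W_+^\alpha\widehat{\mathfrak f}(n)|<\infty$.
   Context: For $\gamma\in\mathbb{R}$, $k^\gamma(0)=1$, $k^\gamma(n)=\frac{\gamma(\gamma+1)\cdots(\gamma+n-1)}{n!}$ for $n\ge1$. For a sequence $f$ on $\mathbb{Z}$ (extended by $0$ for $n<0$ when given on $\mathbb{N}_0$): $W_+f(n)=f(n)-f(n+1)$, $W_+^m$ its powers; for $\alpha>0$, $W_+^{-\alpha}f(n)=\sum_{j\ge n}k^\alpha(j-n)f(j)$ and $W_+^\alpha f=W_+^mW_+^{-(m-\alpha)}f$ with $m=[\alpha]+1$. $A_+^\alpha(\mathbb{T})$ is the space of continuous $2\pi$-periodic functions $\mathfrak f(t)=\sum_{n\ge0}\widehat{\mathfrak f}(n)e^{int}$ with norm $\sum_{n\ge0}k^{\alpha+1}(n)|W_+^\alpha\widehat{\mathfrak f}(n)|<\infty$. *)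

(* Defs.v *)
From Stdlib Require Import Reals ZArith Classical ClassicalEpsilon.
Open Scope R_scope.

Definition Cx := (R * R)%type.
Definition Cmod (z : Cx) : R := sqrt (fst z * fst z + snd z * snd z).

(* k^gamma(n) = gamma(gamma+1)...(gamma+n-1)/n!, k^gamma(0)=1 *)
Fixpoint kcoef (g : R) (n : nat) : R :=
  match n with
  | O => 1
  | S p => kcoef g p * (g + INR p) / INR (S p)
  end.

(* n^alpha for n >= 1, and 0^alpha = 0 (alpha > 0) *)
Definition npow (n : nat) (a : R) : R :=
  match n with O => 0 | _ => Rpower (INR n) a end.

Definition Csum (u : nat -> Cx) (l : Cx) : Prop :=
  infinite_sum (fun j => fst (u j)) (fst l) /\ infinite_sum (fun j => snd (u j)) (snd l).

Definition Csummable (u : nat -> Cx) : Prop := exists l, Csum u l.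

(* value of a convergent complex series (0 if divergent; convergence is asserted separately) *)
Definition Cseries (u : nat -> Cx) : Cx :=
  match excluded_middle_informative (Csummable u) with
  | left H => proj1_sig (constructive_indefinite_description _ H)
  | right _ => (0, 0)
  end.

Definition Cscal (r : R) (z : Cx) : Cx := (r * fst z, r * snd z).
Definition Csub (z w : Cx) : Cx := (fst z - fst w, snd z - snd w).

Definition Wplus (f : nat -> Cx) : nat -> Cx := fun n => Csub (f n) (f (S n)).
Fixpoint Wplus_pow (m : nat) (f : nat -> Cx) : nat -> Cx :=
  match m with O => f | S p => Wplus (Wplus_pow p f) end.

Definition Wneg_term (b : R) (f : nat -> Cx) (n : nat) : nat -> Cx :=
  fun j => Cscal (kcoef b j) (f (n + j)%nat).

(* W_+^{-beta} f(n) = sum_{j >= n} k^beta(j-n) f(j) *)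
Definition Wneg (b : R) (f : nat -> Cx) : nat -> Cx :=
  fun n => Cseries (Wneg_term b f n).

(* m = [alpha] + 1 ; for real alpha, up alpha = floor alpha + 1 *)
Definition mfrac (a : R) : nat := Z.to_nat (up a).

Definition Wfrac (a : R) (f : nat -> Cx) : nat -> Cx :=
  Wplus_pow (mfrac a) (Wneg (INR (mfrac a) - a) f).

Definition Rsummable (u : nat -> R) : Prop := exists l, infinite_sum u l.

(* Main.v *)
Require Import Defs.
From Stdlib Require Import Reals Lra Lia ZArith Classical ClassicalEpsilon.
From Coquelicot Require Import Coquelicot.
Require Import Defs.
Open Scope R_scope.

Lemma psum_le_Series (a : nat -> R) N :
  ex_series a -> (forall n, 0 <= a n) -> sum_f_R0 a N <= Series a.
Proof.
  intros He Hp. apply sum_incr; auto.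
  apply is_series_Reals. apply Series_correct; auto.
Qed.

Lemma term_le_Series (a : nat -> R) N :
  ex_series a -> (forall n, 0 <= a n) -> a N <= Series a.
Proof.
  intros He Hp. eapply Rle_trans; [|apply (psum_le_Series a N); auto].
  destruct N; simpl; [lra|]. assert (0 <= sum_f_R0 a N).
  { apply cond_pos_sum; auto. } lra.
Qed.

Lemma bounded_ex_series (a : nat -> R) K :
  (forall n, 0 <= a n) -> (forall N, sum_f_R0 a N <= K) -> ex_series a.
Proof.
  intros Hp Hb. destruct (growing_cv (sum_f_R0 a)) as [l Hl].
  - intro n. simpl. specialize (Hp (S n)). lra.
  - exists K. intros x [n ->]. auto.
  - exists l. apply is_series_Reals. exact Hl.
Qed.

Lemma Series_sum_f (h : nat -> nat -> R) M :
  (forall n, ex_series (h n)) ->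
  Series (fun N => sum_f_R0 (fun n => h n N) M) = sum_f_R0 (fun n => Series (h n)) M
  /\ ex_series (fun N => sum_f_R0 (fun n => h n N) M).
Proof.
  intros He. induction M as [|M [IH1 IH2]]; simpl.
  - split; [apply Series_ext; reflexivity|]. eapply ex_series_ext; [|apply (He 0%nat)]. reflexivity.
  - rewrite Series_plus; auto. rewrite IH1. split; [reflexivity|].
    apply (ex_series_plus _ _ IH2 (He (S M))).
Qed.

Lemma Series_tail_le (G : nat -> R) N :
  ex_series G -> (forall n, 0 <= G n) -> Series (fun k => G (N + k)%nat) <= Series G.
Proof.
  intros He Hp. induction N.
  - simpl. right. apply Series_ext. reflexivity.
  - assert (He2 : ex_series (fun k => G (N + k)%nat)) by (apply ex_series_incr_n; auto).
    rewrite Series_incr_1 in IHN by auto.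
    eapply Rle_trans; [|apply IHN].
    assert (0 <= G (N + 0)%nat) by auto.
    assert (Series (fun k => G (S N + k)%nat) = Series (fun k => G (N + S k)%nat)).
    { apply Series_ext. intro k. f_equal. lia. } lra.
Qed.

Lemma kcoef_S g p : kcoef g (S p) = kcoef g p * (g + INR p) / INR (S p).
Proof. reflexivity. Qed.

Lemma kcoef_diff g N : kcoef (g - 1) (S N) = kcoef g (S N) - kcoef g N.
Proof.
  induction N.
  - simpl. field.
  - rewrite kcoef_S, IHN. rewrite !kcoef_S. rewrite !S_INR.
    assert (0 <= INR N) by apply pos_INR. field. lra.
Qed.

Lemma kcoef_beta b j : 0 < b <= 1 -> 0 <= kcoef b j <= 1.
Proof.
  intro H. induction j; [simpl; lra|]. rewrite kcoef_S.
  rewrite S_INR. assert (0 <= INR j) by apply pos_INR.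
  assert (Hi: 0 < / (INR j + 1)) by (apply Rinv_0_lt_compat; lra).
  assert (Hii: (INR j+1) * / (INR j+1) = 1) by (field; lra).
  unfold Rdiv. set (u := / (INR j + 1)) in *. set (k := kcoef b j) in *.
  assert (0 <= (b + INR j) * u <= 1) by nra. nra.
Qed.

Lemma kcoef_a_ge1 a L : 0 < a -> 1 <= kcoef (a+1) L.
Proof.
  intro H. induction L; [simpl; lra|]. rewrite kcoef_S.
  rewrite S_INR. assert (0 <= INR L) by apply pos_INR.
  apply (Rmult_le_reg_r (INR L + 1)); [lra|]. unfold Rdiv. rewrite Rmult_assoc, Rinv_l by lra.
  nra.
Qed.

Lemma kcoef_a_mono a n N : 0 < a -> kcoef (a+1) n <= kcoef (a+1) (n + N).
Proof.
  intro H. induction N.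
  - rewrite Nat.add_0_r. lra.
  - rewrite Nat.add_succ_r, kcoef_S, S_INR.
    assert (0 <= INR (n+N)) by apply pos_INR.
    pose proof (kcoef_a_ge1 a (n+N) H).
    apply (Rmult_le_reg_r (INR (n+N) + 1)); [lra|]. unfold Rdiv. rewrite Rmult_assoc, Rinv_l by lra.
    nra.
Qed.

Lemma ln_le_sub1 t : 0 < t -> ln t <= t - 1.
Proof. intro H. pose proof (exp_ineq1_le (ln t)). rewrite exp_ln in H0; lra. Qed.

Lemma Rpower_ratio a L : 0 < a -> (1 <= L)%nat ->
  (a + 1 + INR L) / (INR L + 1) <= Rpower ((INR L + 1) / INR L) a.
Proof.
  intros Ha HL. assert (1 <= INR L) by (apply (le_INR 1); auto).
  unfold Rpower. eapply Rle_trans; [|apply exp_ineq1_le].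
  assert (ln ((INR L + 1) / INR L) >= 1 / (INR L + 1)).
  { assert (ln ((INR L + 1) / INR L) = - ln (INR L / (INR L + 1))).
    { rewrite <- ln_Rinv. f_equal. field. lra. apply Rdiv_lt_0_compat; lra. }
    rewrite H0. pose proof (ln_le_sub1 (INR L / (INR L + 1))).
    assert (INR L / (INR L + 1) - 1 = - (1 / (INR L + 1))) by (field; lra).
    assert (0 < INR L / (INR L + 1)) by (apply Rdiv_lt_0_compat; lra). lra. }
  assert ((a + 1 + INR L) / (INR L + 1) = 1 + a * (1 / (INR L + 1))) by (field; lra).
  rewrite H1. apply Rplus_le_compat_l. apply Rmult_le_compat_l; lra.
Qed.

Lemma Rpower_pos x y : 0 < Rpower x y.
Proof. unfold Rpower. apply exp_pos. Qed.

Lemma kcoef_a_bound a L : 0 < a -> (1 <= L)%nat ->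
  kcoef (a+1) L <= (a+1) * Rpower (INR L) a.
Proof.
  intros Ha HL. induction L; [lia|].
  destruct L.
  - simpl. unfold Rpower. rewrite ln_1, Rmult_0_r, exp_0. lra.
  - specialize (IHL ltac:(lia)). rewrite kcoef_S.
    assert (H1 : 1 <= INR (S L)) by (apply (le_INR 1); lia).
    pose proof (Rpower_ratio a (S L) Ha ltac:(lia)) as Hr.
    assert (E : Rpower (INR (S (S L))) a = Rpower (INR (S L)) a * Rpower ((INR (S L) + 1)/ INR (S L)) a).
    { rewrite Rpower_mult_distr by (try apply Rdiv_lt_0_compat; lra). f_equal. rewrite S_INR. field. lra. }
    rewrite E. rewrite (S_INR (S L)).
    assert (0 <= kcoef (a+1) (S L)) by (pose proof (kcoef_a_ge1 a (S L) Ha); lra).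
    set (X := (a + 1 + INR (S L)) / (INR (S L) + 1)) in *.
    assert (0 <= X) by (unfold X; apply Rmult_le_pos; [lra| left; apply Rinv_0_lt_compat; lra]).
    replace (kcoef (a + 1) (S L) * (a + 1 + INR (S L)) / (INR (S L) + 1)) with (kcoef (a + 1) (S L) * X)
      by (unfold X; field; lra).
    pose proof (Rpower_pos (INR (S L)) a). pose proof (Rpower_pos ((INR (S L) + 1) / INR (S L)) a).
    rewrite <- Rmult_assoc. apply Rmult_le_compat; lra.
Qed.

Lemma psum_mono (t : nat -> R) M d : (forall n, 0 <= t n) -> sum_f_R0 t M <= sum_f_R0 t (M + d).
Proof.
  intro H. induction d. rewrite Nat.add_0_r; lra.
  rewrite Nat.add_succ_r. simpl. specialize (H (S (M+d))). lra.
Qed.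

Lemma kneg_rec a N : 0 < a -> a < INR N ->
  (INR N + 1) * Rabs (kcoef (-a) (S N)) = (INR N - a) * Rabs (kcoef (-a) N).
Proof.
  intros Ha HN. rewrite kcoef_S, S_INR. assert (0 <= INR N) by apply pos_INR.
  replace (kcoef (- a) N * (- a + INR N) / (INR N + 1)) with (kcoef (- a) N * ((INR N - a) / (INR N + 1))) by (field; lra).
  rewrite Rabs_mult. rewrite (Rabs_right ((INR N - a) / (INR N + 1))).
  - field. lra.
  - left. apply Rdiv_lt_0_compat; lra.
Qed.

Lemma kneg_summable a p : 0 < a -> a < INR (S p) ->
  ex_series (fun N => Rabs (kcoef (-a) N)).
Proof.
  intros Ha Hp. set (t := fun N => Rabs (kcoef (-a) N)).
  assert (Ht : forall n, 0 <= t n) by (intro; apply Rabs_pos).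
  assert (Inv : forall j, a * sum_f_R0 t (p + j) + INR (S p + j) * t (S p + j)%nat
                   = a * sum_f_R0 t p + INR (S p) * t (S p)).
  { induction j. rewrite !Nat.add_0_r. reflexivity.
    rewrite <- IHj. rewrite Nat.add_succ_r. simpl sum_f_R0.
    replace (S p + S j)%nat with (S (S (p + j))) by lia.
    replace (S p + j)%nat with (S (p + j)) by lia.
    unfold t. rewrite (S_INR (S (p+j))).
    rewrite (kneg_rec a (S (p+j))) by (first [lra | apply Rlt_le_trans with (INR (S p)); [lra | apply le_INR; lia]]).
    ring. }
  apply (bounded_ex_series t (sum_f_R0 t p + INR (S p) * t (S p) / a)); auto.
  intro M. assert (0 <= INR (S p) * t (S p) / a).
  { apply Rmult_le_pos; [apply Rmult_le_pos; [apply pos_INR| auto]| left; apply Rinv_0_lt_compat; lra]. }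
  destruct (Compare_dec.le_lt_dec M p).
  - replace p with (M + (p - M))%nat at 1 by lia. pose proof (psum_mono t M (p - M) Ht). lra.
  - replace M with (p + (M - p))%nat by lia. specialize (Inv (M - p)%nat).
    assert (0 <= INR (S p + (M - p)) * t (S p + (M - p))%nat) by (apply Rmult_le_pos; [apply pos_INR|auto]).
    apply (Rmult_le_reg_l a); auto. replace (a * (sum_f_R0 t p + INR (S p) * t (S p) / a)) with (a * sum_f_R0 t p + INR (S p) * t (S p)) by (field; lra).
    lra.
Qed.

Lemma plusR x y : plus x y = x + y. Proof. reflexivity. Qed.
Lemma oppR x : opp x = - x. Proof. reflexivity. Qed.
Lemma normR x : norm x = Rabs x. Proof. reflexivity. Qed.

Lemma exR_le (a b : nat -> R) : (forall n, Rabs (a n) <= b n) -> ex_series b -> ex_series a.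
Proof. intros H He. apply (@ex_series_le R_AbsRing R_CompleteNormedModule a b); auto. Qed.

Lemma mfrac_spec a : 0 < a -> a < INR (mfrac a) <= a + 1.
Proof.
  intro Ha. unfold mfrac. destruct (archimed a) as [H1 H2].
  assert (0 <= up a)%Z. { apply le_IZR. lra. }
  rewrite INR_IZR_INZ, Z2Nat.id by auto. lra.
Qed.

Lemma Cmod_fst z : Rabs (fst z) <= Cmod z.
Proof.
  unfold Cmod. rewrite <- sqrt_Rsqr_abs. apply sqrt_le_1_alt. unfold Rsqr.
  pose proof (Rle_0_sqr (snd z)). unfold Rsqr in H. lra.
Qed.
Lemma Cmod_snd z : Rabs (snd z) <= Cmod z.
Proof.
  unfold Cmod. rewrite <- sqrt_Rsqr_abs. apply sqrt_le_1_alt. unfold Rsqr.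
  pose proof (Rle_0_sqr (fst z)). unfold Rsqr in H. lra.
Qed.
Lemma Cmod_le z : Cmod z <= Rabs (fst z) + Rabs (snd z).
Proof.
  unfold Cmod. rewrite <- (sqrt_Rsqr (Rabs (fst z) + Rabs (snd z))).
  2: pose proof (Rabs_pos (fst z)); pose proof (Rabs_pos (snd z)); lra.
  apply sqrt_le_1_alt. unfold Rsqr.
  pose proof (Rabs_pos (fst z)); pose proof (Rabs_pos (snd z)).
  replace (fst z * fst z) with (Rabs (fst z) * Rabs (fst z)) by (rewrite <- Rabs_mult; apply Rabs_right; apply Rle_ge; apply Rle_0_sqr).
  replace (snd z * snd z) with (Rabs (snd z) * Rabs (snd z)) by (rewrite <- Rabs_mult; apply Rabs_right; apply Rle_ge; apply Rle_0_sqr).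
  nra.
Qed.
Lemma Cmod_pos z : 0 <= Cmod z.
Proof. unfold Cmod. apply sqrt_pos. Qed.

Lemma Cseries_eq u l : Csum u l -> Cseries u = l.
Proof.
  intro H. unfold Cseries. destruct excluded_middle_informative as [Hs|Hn].
  - destruct constructive_indefinite_description as [l' H']. simpl.
    destruct H as [H1 H2], H' as [H1' H2']. destruct l, l'. simpl in *.
    f_equal; eapply uniqueness_sum; eauto.
  - exfalso. apply Hn. exists l. auto.
Qed.

Lemma Csum_Cseries u : Csummable u -> Csum u (Cseries u).
Proof. intros [l Hl]. rewrite (Cseries_eq u l Hl). auto. Qed.

Lemma Csum_of_abs (u : nat -> Cx) (b : nat -> R) :
  (forall j, Cmod (u j) <= b j) -> ex_series b ->
  Csum u (Series (fun j => fst (u j)), Series (fun j => snd (u j))).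
Proof.
  intros Hb He. split; simpl; apply is_series_Reals; apply Series_correct;
  eapply exR_le; try apply He; intro n.
  - eapply Rle_trans; [apply Cmod_fst| apply Hb].
  - eapply Rle_trans; [apply Cmod_snd| apply Hb].
Qed.

Ltac Rring := match goal with |- ?l = ?r => change (@eq R l r); ring end.

Lemma aux_pm (x y : R) : plus (x - y) y = x.
Proof. rewrite plusR. lra. Qed.

Lemma real_step (x : nat -> R) g n h1 h2 :
  is_series (fun N => kcoef g N * x (n + N)%nat) h1 ->
  is_series (fun N => kcoef g N * x (S n + N)%nat) h2 ->
  is_series (fun N => kcoef (g - 1) N * x (n + N)%nat) (h1 - h2).
Proof.
  intros A B.
  set (a := fun N => kcoef g N * x (n + N)%nat) in *.
  assert (A' : is_series (fun k => a (S k)) (h1 - a 0%nat)).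
  { apply is_series_incr_1. rewrite aux_pm. exact A. }
  pose proof (is_series_minus _ _ _ _ A' B) as C.
  apply is_series_decr_1. rewrite plusR, oppR.
  replace (h1 - h2 + - (kcoef (g - 1) 0 * x (n + 0)%nat)) with (plus (h1 - a 0%nat) (opp h2))
    by (rewrite plusR, oppR; unfold a; simpl; Rring).
  eapply is_series_ext; [|apply C]. intro k. cbv beta. rewrite plusR, oppR.
  unfold a. rewrite kcoef_diff. replace (S n + k)%nat with (n + S k)%nat by lia. Rring.
Qed.

Lemma repr_lemma b (f : nat -> Cx) :
  (forall n, Csummable (Wneg_term b f n)) ->
  forall p n, Csum (fun N => Cscal (kcoef (b - INR p) N) (f (n + N)%nat)) (Wplus_pow p (Wneg b f) n).
Proof.
  intros Hs p. induction p; intro n.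
  - simpl. unfold Wneg. replace (b - 0) with b by ring. apply Csum_Cseries, Hs.
  - simpl Wplus_pow. unfold Wplus, Csub. 
    destruct (IHp n) as [A1 A2]. destruct (IHp (S n)) as [B1 B2].
    replace (b - INR (S p)) with (b - INR p - 1) by (rewrite S_INR; ring).
    split; simpl; apply is_series_Reals.
    + apply (real_step (fun L => fst (f L))); apply is_series_Reals; auto.
    + apply (real_step (fun L => snd (f L))); apply is_series_Reals; auto.
Qed.

Lemma Cmod_scal r z : Cmod (Cscal r z) = Rabs r * Cmod z.
Proof.
  unfold Cmod, Cscal; simpl.
  replace (r * fst z * (r * fst z) + r * snd z * (r * snd z)) with ((r*r) * (fst z * fst z + snd z * snd z)) by ring.
  rewrite sqrt_mult_alt by (apply Rle_0_sqr). f_equal. rewrite <- sqrt_Rsqr_abs. reflexivity.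
Qed.

Lemma exR_scal c (a : nat -> R) : ex_series a -> ex_series (fun n => c * a n).
Proof. intro H. eapply ex_series_ext; [|apply (ex_series_scal_l c a H)]. intro; reflexivity. Qed.

Lemma Rpower_ge1 L a : 0 < a -> 1 <= Rpower (INR (S L)) a.
Proof.
  intro Ha. unfold Rpower. eapply Rle_trans; [|apply exp_ineq1_le].
  assert (0 <= ln (INR (S L))).
  { rewrite <- ln_1. apply ln_le; [lra|]. apply (le_INR 1); lia. }
  nra.
Qed.

Lemma sum_scalR (k : R) (g : nat -> R) M : sum_f_R0 (fun n => k * g n) M = k * sum_f_R0 g M.
Proof. induction M; simpl; [ring| rewrite IHM; ring]. Qed.

Theorem mainTheorem10 (alpha : R) (f : nat -> Cx) :
  0 < alpha ->
  Rsummable (fun n => npow n alpha * Cmod (f n)) ->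
  (forall n, Csummable (Wneg_term (INR (mfrac alpha) - alpha) f n)) /\
  Rsummable (fun n => kcoef (alpha + 1) n * Cmod (Wfrac alpha f n)).
Proof.
  intros Ha Hsum.
  destruct (mfrac_spec alpha Ha) as [Hm1 Hm2].
  assert (Hf0 : ex_series (fun n => npow n alpha * Cmod (f n))).
  { destruct Hsum as [l Hl]. exists l. apply is_series_Reals. exact Hl. }
  set (F := fun L => Cmod (f L)).
  assert (HFp : forall L, 0 <= F L) by (intro; apply Cmod_pos).
  assert (HF : ex_series F).
  { apply ex_series_incr_1. apply ex_series_incr_1 in Hf0.
    eapply exR_le; [|apply Hf0]. intro L. cbv beta.
    change (npow (S L) alpha) with (Rpower (INR (S L)) alpha). rewrite Rabs_right by (apply Rle_ge; auto).
    pose proof (Rpower_ge1 L alpha Ha). pose proof (HFp (S L)). unfold F in *. nra. }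
  assert (Part1 : forall n, Csummable (Wneg_term (INR (mfrac alpha) - alpha) f n)).
  { intro n. eexists. apply (Csum_of_abs _ (fun j => F (n + j)%nat)).
    - intro j. unfold Wneg_term. rewrite Cmod_scal.
      destruct (kcoef_beta (INR (mfrac alpha) - alpha) j) as [k0 k1]; [lra|].
      rewrite Rabs_right by lra. pose proof (HFp (n+j)%nat). unfold F in *. nra.
    - apply ex_series_incr_n. exact HF. }
  split; [exact Part1|].
  set (a := kcoef (alpha + 1)).
  assert (Ha1 : forall L, 1 <= a L) by (intro; apply kcoef_a_ge1; auto).
  set (G := fun L => a L * F L).
  assert (HGp : forall L, 0 <= G L) by (intro; unfold G; pose proof (Ha1 L); pose proof (HFp L); nra).
  assert (HG : ex_series G).
  { apply ex_series_incr_1. apply ex_series_incr_1 in Hf0.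
    eapply exR_le; [|apply (exR_scal (alpha + 1) _ Hf0)]. intro L. cbv beta.
    rewrite Rabs_right by (apply Rle_ge; auto).
    pose proof (kcoef_a_bound alpha (S L) Ha ltac:(lia)). pose proof (HFp (S L)).
    unfold G, a, F in *. change (npow (S L) alpha) with (Rpower (INR (S L)) alpha). rewrite <- Rmult_assoc. apply Rmult_le_compat_r; auto. }
  set (SG := Series G).
  assert (HGS : forall L, G L <= SG) by (intro; apply term_le_Series; auto).
  destruct (mfrac alpha) as [|p] eqn:Em; [simpl in Hm1; lra|].
  set (t := fun N => Rabs (kcoef (-alpha) N)).
  assert (Htp : forall N, 0 <= t N) by (intro; apply Rabs_pos).
  assert (Ht : ex_series t) by (apply (kneg_summable alpha p); auto).
  set (B := Series t).
  assert (Hrep : forall n, Csum (fun N => Cscal (kcoef (-alpha) N) (f (n + N)%nat)) (Wfrac alpha f n)).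
  { intro n. pose proof (repr_lemma _ f Part1 (S p) n) as H.
    replace (INR (S p) - alpha - INR (S p)) with (-alpha) in H by ring.
    unfold Wfrac. rewrite Em. exact H. }
  set (c := fun n N => t N * G (n + N)%nat).
  assert (Hc : forall n, ex_series (c n)).
  { intro n. eapply exR_le; [|apply (exR_scal SG _ Ht)]. intro N. unfold c.
    rewrite Rabs_right by (apply Rle_ge, Rmult_le_pos; auto).
    pose proof (HGS (n+N)%nat). pose proof (Htp N). nra. }
  assert (Hbound : forall n, a n * Cmod (Wfrac alpha f n) <= 2 * Series (c n)).
  { intro n. set (u := fun N => Cscal (kcoef (- alpha) N) (f (n + N)%nat)).
    set (b := fun N => t N * F (n + N)%nat).
    assert (Hbp : forall N, 0 <= b N) by (intro; unfold b; apply Rmult_le_pos; auto).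
    assert (Hbc : forall N, b N <= c n N).
    { intro N. unfold b, c, G. apply Rmult_le_compat_l; [auto|]. pose proof (Ha1 (n+N)%nat). pose proof (HFp (n+N)%nat). nra. }
    assert (Hb : ex_series b).
    { eapply exR_le; [|apply (Hc n)]. intro N. rewrite Rabs_right by (apply Rle_ge; auto). auto. }
    assert (Hub : forall N, Cmod (u N) = b N) by (intro N; unfold u, b; rewrite Cmod_scal; reflexivity).
    pose proof (Csum_of_abs u b ltac:(intro; rewrite Hub; lra) Hb) as H1.
    pose proof (Cseries_eq _ _ H1) as E1. pose proof (Cseries_eq _ _ (Hrep n)) as E2.
    fold u in E2. rewrite E2 in E1. rewrite E1.
    assert (Hu1 : ex_series (fun N => Rabs (fst (u N)))).
    { eapply exR_le; [|apply Hb]. intro N. rewrite Rabs_Rabsolu, <- Hub. apply Cmod_fst. }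
    assert (Hu2 : ex_series (fun N => Rabs (snd (u N)))).
    { eapply exR_le; [|apply Hb]. intro N. rewrite Rabs_Rabsolu, <- Hub. apply Cmod_snd. }
    pose proof (Series_Rabs _ Hu1). pose proof (Series_Rabs _ Hu2).
    assert (Series (fun N => Rabs (fst (u N))) <= Series b).
    { apply Series_le; auto. intro N. split; [apply Rabs_pos|]. rewrite <- Hub. apply Cmod_fst. }
    assert (Series (fun N => Rabs (snd (u N))) <= Series b).
    { apply Series_le; auto. intro N. split; [apply Rabs_pos|]. rewrite <- Hub. apply Cmod_snd. }
    assert (HC : Cmod (Series (fun j => fst (u j)), Series (fun j => snd (u j))) <=
      Rabs (Series (fun j => fst (u j))) + Rabs (Series (fun j => snd (u j))))
      by exact (Cmod_le (Series (fun j => fst (u j)), Series (fun j => snd (u j)))).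
    assert (a n * Series b <= Series (c n)).
    { rewrite <- Series_scal_l. apply Series_le; auto. intro N. split.
      - apply Rmult_le_pos; [pose proof (Ha1 n); lra| auto].
      - unfold b, c, G. pose proof (kcoef_a_mono alpha n N Ha) as Hmo. fold a in Hmo.
        pose proof (HFp (n+N)%nat). pose proof (Htp N).
        replace (a n * (t N * F (n + N)%nat)) with (t N * (a n * F (n + N)%nat)) by ring.
        apply Rmult_le_compat_l; [auto|]. nra. }
    pose proof (Ha1 n).
    assert (HX : Cmod (Series (fun j => fst (u j)), Series (fun j => snd (u j))) <= 2 * Series b) by lra.
    apply Rle_trans with (a n * (2 * Series b)); [apply Rmult_le_compat_l; lra| lra]. }
  assert (Hsumbound : forall M, sum_f_R0 (fun n => a n * Cmod (Wfrac alpha f n)) M <= 2 * (SG * B)).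
  { intro M. eapply Rle_trans; [apply sum_Rle; intros n _; apply Hbound|].
    rewrite sum_scalR. apply Rmult_le_compat_l; [lra|].
    destruct (Series_sum_f c M Hc) as [E2 Hex]. rewrite <- E2.
    unfold B. rewrite <- Series_scal_l.
    apply Series_le; [|apply exR_scal; auto]. intro N. split.
    - apply cond_pos_sum. intro; unfold c; apply Rmult_le_pos; auto.
    - unfold c. rewrite sum_scalR. rewrite Rmult_comm. apply Rmult_le_compat_r; [auto|].
      assert (HGN : ex_series (fun k => G (N + k)%nat)) by (apply ex_series_incr_n; auto).
      eapply Rle_trans; [|apply (Series_tail_le G N); auto].
      replace (sum_f_R0 (fun n => G (n + N)%nat) M) with (sum_f_R0 (fun k => G (N + k)%nat) M).
      + apply psum_le_Series; auto.
      + apply sum_eq. intros. f_equal. lia. }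
  assert (Hfin : ex_series (fun n => a n * Cmod (Wfrac alpha f n))).
  { apply (bounded_ex_series _ (2 * (SG * B))); auto.
    intro n. apply Rmult_le_pos; [pose proof (Ha1 n); lra| apply Cmod_pos]. }
  exists (Series (fun n => a n * Cmod (Wfrac alpha f n))). apply is_series_Reals. apply Series_correct. exact Hfin.
Qed.
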